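(* Let $R$ be a commutative domain with unit, let $f\in R$ be nonzero and non-invertible, and let $S=R[u,v]/(uv-f)$ (with $R$ regarded as a subring of $S$). Then the groups of invertible elements satisfy $R^{\times}=S^{\times}$. In particular, the images of $u$ and $v$ in $S$ are not invertible.
   Context: For a domain $A$, $A^{\times}$ denotes its set of invertible elements. *)

(* Defs.v *)
From HB Require Import structures.
From mathcomp Require Import all_boot all_order all_algebra.
Set Implicit Arguments. Unset Strict Implicit. Unset Printing Implicit Defensive.
Import Order.TTheory GRing.Theory Num.Theory.
Local Open Scope ring_scope.

(* The polynomial ring R[u,v] is modelled as {poly {poly R}} = (R[u])[v]:
   the inner variable is u, the outer variable is v. *)
Definition var_u (R : idomainType) : {poly {poly R}} := ('X)%:P.
Definition var_v (R : idomainType) : {poly {poly R}} := 'X.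
Definition cstUV (R : idomainType) (r : R) : {poly {poly R}} := r%:P%:P.

Definition relUV (R : idomainType) (f : R) : {poly {poly R}} :=
  var_u R * var_v R - cstUV f.

Definition eqS (R : idomainType) (f : R) (p q : {poly {poly R}}) : Prop :=
  exists h : {poly {poly R}}, p - q = relUV f * h.

Definition unitS (R : idomainType) (f : R) (p : {poly {poly R}}) : Prop :=
  exists q : {poly {poly R}}, eqS f (p * q) 1.

(* Main.v *)
Require Import Defs.
From HB Require Import structures.
From mathcomp Require Import all_boot all_order all_algebra.
From mathcomp Require Import fraction ring zify.
Import Order.TTheory GRing.Theory Num.Theory.
Local Open Scope ring_scope.

Lemma aux (F : fieldType) (x y a c : F) : x != 0 -> y * x * (a * (c / x)) = a * c * y.
Proof. move=> hx; rewrite -[RHS](divfK hx); ring. Qed.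

Lemma root0_X (R : idomainType) (p : {poly R}) : p`_0 = 0 -> exists q, p = q * 'X.
Proof.
move=> h; have /factor_theorem [q ->] : root p 0 by rewrite /root horner_coef0 h.
by exists q; rewrite subr0.
Qed.

Lemma factorXn (R : idomainType) (k : nat) (A B : {poly R}) :
  A * B = 'X^k -> exists2 c : R, c \is a GRing.unit & exists2 i, (i <= k)%N & A = c%:P * 'X^i.
Proof.
elim: k A B => [|k IH] A B.
  rewrite expr0 => hAB.
  have : A \is a GRing.unit by apply/unitrP; exists B; rewrite hAB mulrC hAB.
  rewrite poly_unitE => /andP [/eqP s1 u0].
  exists A`_0 => //; exists 0%N => //; rewrite expr0 mulr1.
  by rewrite -size1_polyC ?s1.
move=> hAB.
have h0 : A`_0 * B`_0 = 0.
  by rewrite -coef0M hAB coefXn.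
have Xn0 : ('X : {poly R}) != 0 by rewrite polyX_eq0.
move/eqP: h0; rewrite mulf_eq0 => /orP [/eqP hA | /eqP hB].
  have [A' eA] := root0_X _ _ hA.
  have : A' * B = 'X^k.
    apply: (mulIf Xn0); rewrite -exprSr -hAB eA; ring.
  move=> /IH [c cu [i ik eA']]; exists c => //; exists i.+1 => //.
  by rewrite eA eA' exprSr mulrA.
have [B' eB] := root0_X _ _ hB.
have : A * B' = 'X^k.
  apply: (mulIf Xn0); rewrite -exprSr -hAB eB; ring.
move=> /IH [c cu [i ik eA']]; exists c => //; exists i => //.
exact: leqW.
Qed.

Section S.
Context {R : idomainType} (f : R).
Local Notation K := {fraction {poly R}}.
Local Notation iota := (@tofrac {poly R}).

Definition tK : K := iota 'X.
Definition evS (p : {poly {poly R}}) : K := (map_poly iota p).[iota f%:P / tK].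
Definition Phi (N : nat) (p : {poly {poly R}}) : {poly R} :=
  \sum_(j < size p) p`_j * (f ^+ j)%:P * 'X^(N - j).

Lemma tK_neq0 : tK != 0.
Proof. by rewrite /tK tofrac_eq0 polyX_eq0. Qed.

Lemma evSM p q : evS (p * q) = evS p * evS q.
Proof. by rewrite /evS rmorphM hornerM. Qed.
Lemma evSB p q : evS (p - q) = evS p - evS q.
Proof. by rewrite /evS rmorphB hornerD hornerN. Qed.
Lemma evS1 : evS 1 = 1.
Proof. by rewrite /evS rmorph1 hornerC. Qed.
Lemma evSC c : evS c%:P = iota c.
Proof. by rewrite /evS map_polyC hornerC. Qed.
Lemma evS_rel h : evS (relUV f * h) = 0.
Proof.
rewrite evSM /relUV /var_u /var_v /cstUV evSB evSM evSC evSC.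
rewrite /evS map_polyX hornerX -/tK.
by rewrite [tK * _]mulrC divfK ?tK_neq0 // subrr mul0r.
Qed.

Lemma L1 N (p : {poly {poly R}}) : (size p <= N.+1)%N -> tK ^+ N * evS p = iota (Phi N p).
Proof.
move=> hs; rewrite /evS horner_coef size_map_inj_poly ?rmorph0 //;
  last by move=> x y /eqP; rewrite tofrac_eq => /eqP.
rewrite mulr_sumr /Phi rmorph_sum; apply: eq_bigr => j _.
have hj : (j <= N)%N by rewrite -ltnS (leq_trans (ltn_ord j)).
rewrite coef_map !rmorphM rmorphXn /= -/tK.
rewrite -(subnK hj) exprD expr_div_n.
have := tK_neq0 => h.
rewrite addnK !rmorphXn -/tK.
exact: aux (expf_neq0 _ h).
Qed.

Lemma relE (d : {poly R}) M :
  relUV f * (d%:P * 'X^M) = (d * 'X)%:P * 'X^(M.+1) - (f%:P * d)%:P * 'X^M.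
Proof. rewrite /relUV /var_u /var_v /cstUV !polyCM exprS; ring. Qed.

Lemma Phi_coef0 (p : {poly {poly R}}) N : size p = N.+1 -> (Phi N p)`_0 = p`_N`_0 * f ^+ N.
Proof.
move=> hs; rewrite /Phi coef_sum.
have ltN : (N < size p)%N by rewrite hs.
rewrite (bigD1 (Ordinal ltN)) //= big1 ?addr0.
  by rewrite subnn expr0 mulr1 coefMC.
move=> j hj; rewrite coefMXn.
have : (j < N)%N.
  have := ltn_ord j; move=> hj'; have : (j <= N)%N by rewrite -ltnS -hs.
  rewrite leq_eqVlt => /orP [/eqP e|//].
  by move: hj; rewrite -val_eqE /= e eqxx.
by rewrite -subn_gt0 => ->.
Qed.

Lemma L4 (hf : f != 0) n : forall p : {poly {poly R}},
  (size p <= n)%N -> evS p = 0 -> exists h, p = relUV f * h.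
Proof.
elim: n => [|n IH] p hs hev.
  by exists 0; rewrite mulr0; apply/eqP; rewrite -size_poly_leq0.
case: (leqP (size p) 1) => hs1.
  exists 0; rewrite mulr0.
  move: hev; rewrite [p]size1_polyC // evSC => /eqP.
  by rewrite tofrac_eq0 => /eqP ->.
set N := (size p).-1.
have hsN : size p = N.+1 by rewrite /N prednK // (leq_trans _ hs1).
have hN0 : (0 < N)%N by rewrite /N -ltnS -hsN.
have hPhi : Phi N p = 0.
  apply/eqP; rewrite -tofrac_eq0 -L1 ?hsN // hev mulr0 //.
have hc : p`_N`_0 = 0.
  have := @Phi_coef0 p N hsN; rewrite hPhi coef0 => /esym/eqP.
  by rewrite mulf_eq0 expf_eq0 (negPf hf) andbF orbF => /eqP.
have [d ed] := root0_X _ _ hc.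
have hM : N = N.-1.+1 by rewrite prednK.
set p' := p - relUV f * (d%:P * 'X^(N.-1)).
have hs' : (size p' <= n)%N.
  apply: (@leq_trans N); last by rewrite -ltnS -hsN.
  apply/leq_sizeP => j hj; rewrite /p' relE -hM !coefE.
  case: (ltngtP j N) => hjN.
  - by move: hj; rewrite leqNgt hjN.
  - have -> : p`_j = 0 by apply/(leq_sizeP _ _ (leqnn (size p))); rewrite hsN.
    have hj1 : (N.-1 < j)%N by rewrite (leq_trans _ hj) // ltn_predL.
    by rewrite (gtn_eqF hj1) /= !mulr0n !mulr0 subrr subr0.
  - subst j; have hj1 : (N.-1 < N)%N by rewrite ltn_predL.
    by rewrite (gtn_eqF hj1) /= !mulr0n mulr0 subr0 mulr1 ed subrr.
have hev' : evS p' = 0 by rewrite /p' evSB hev evS_rel subrr.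
have [h' eh'] := IH p' hs' hev'.
exists (h' + d%:P * 'X^(N.-1)).
by rewrite mulrDr -eh' /p' subrK.
Qed.

Lemma L2 (p : {poly {poly R}}) N c i : (size p <= N.+1)%N -> (i < N)%N ->
  Phi N p = c%:P * 'X^i -> exists d, c = f * d.
Proof.
move=> hs hi hP.
have -> : c = (Phi N p)`_i by rewrite hP coefCM coefXn eqxx mulr1.
exists (\sum_(j < size p) (p`_j * 'X^(N - j))`_i * f ^+ (j.-1)).
rewrite /Phi coef_sum mulr_sumr; apply: eq_bigr => j _.
rewrite mulrAC coefMC.
case: (nat_of_ord j) => [|k].
  by rewrite subn0 coefMXn hi !mul0r mulr0.
by rewrite exprS /= mulrCA.
Qed.

Lemma evS_ev (p : {poly {poly R}}) N : (size p <= N.+1)%N -> evS p = 0 -> Phi N p = 0.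
Proof. by move=> hs he; apply/eqP; rewrite -tofrac_eq0 -L1 // he mulr0. Qed.
End S.

Theorem lemma1p2 (R : idomainType) (f : R) (hf0 : f != 0)
    (hfu : f \isn't a GRing.unit) :
  (forall p : {poly {poly R}},
      unitS f p <-> exists2 r : R, r \is a GRing.unit & eqS f p (cstUV r))
  /\ ~ unitS f (var_u R) /\ ~ unitS f (var_v R).
Proof.
have iota_inj : injective (@tofrac {poly R}).
  by move=> x y /eqP; rewrite tofrac_eq => /eqP.
have P1 : forall p : {poly {poly R}},
      unitS f p <-> exists2 r : R, r \is a GRing.unit & eqS f p (cstUV r).
  move=> p; split; last first.
    move=> [r ru [h eh]]; exists (cstUV r^-1); exists (h * cstUV r^-1).
    have -> : p * cstUV r^-1 - 1 = (p - cstUV r) * cstUV r^-1 + (cstUV r * cstUV r^-1 - 1) by ring.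
    by rewrite /cstUV -!polyCM divrr // subrr addr0 eh mulrA.
  move=> [q [h eh]].
  have e1 : evS f p * evS f q = 1.
    by apply/subr0_eq; rewrite -evSM -(evS1 f) -evSB eh evS_rel.
  set N := size p; set M := size q.
  have hAB : Phi f N p * Phi f M q = 'X^(N + M).
    apply: iota_inj; transitivity (tofrac (Phi f N p) * tofrac (Phi f M q)); first exact: rmorphM.
    rewrite -!L1 ?leqnSn // rmorphXn -/(@tK R).
    by rewrite mulrACA -mulrA e1 mulr1 exprD.
  have [c cu [i iNM eA]] := factorXn _ _ _ _ hAB.
  have hBA : Phi f M q * Phi f N p = 'X^(N + M) by rewrite mulrC.
  have [c' cu' [i' iNM' eB]] := factorXn _ _ _ _ hBA.
  have hii : (i + i' = N + M)%N.
    have := congr1 (fun x : {poly R} => size x) hAB; rewrite /= eA eB mulrACA -polyCM -exprD.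
    rewrite size_Cmul ?size_polyXn; first by move=> [].
    by apply/eqP => c0; have := unitrM c c'; rewrite cu cu' c0 unitr0.
  have fnd : forall d, f * d \isn't a GRing.unit.
    by move=> d; rewrite unitrM (negPf hfu).
  case: (ltngtP i N) => hiN.
  - have [d ed] := @L2 _ f _ _ _ _ (leqnSn _) hiN eA.
    by move: cu; rewrite ed (negPf (fnd d)).
  - have hi' : (i' < M)%N by lia.
    have [d ed] := @L2 _ f _ _ _ _ (leqnSn _) hi' eB.
    by move: cu'; rewrite ed (negPf (fnd d)).
  - exists c => //.
    have hev : evS f (p - cstUV c) = 0.
      rewrite evSB /cstUV evSC.
      apply/eqP; have : (@tK R) ^+ N * (evS f p - tofrac c%:P) == 0.
        rewrite mulrBr L1 ?leqnSn // eA hiN.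
        by rewrite (rmorphM (@tofrac {poly R})) rmorphXn -/(@tK R) mulrC subrr.
      by rewrite mulf_eq0 expf_eq0 (negPf (@tK_neq0 R)) andbF.
    have [h' eh'] := @L4 _ f hf0 _ _ (leqnn _) hev.
    by exists h'.
split => //.
split.
  move=> /P1 [r _ [h eh]].
  have := congr1 (evS f) eh; rewrite evS_rel evSB /cstUV evSC /var_u evSC => /subr0_eq.
  move=> /iota_inj => e; have := congr1 (fun x : {poly R} => size x) e.
  by rewrite /= size_polyX size_polyC; case: (r != 0).
move=> /P1 [r _ [h eh]].
have := congr1 (evS f) eh; rewrite evS_rel evSB /cstUV evSC /var_v /evS map_polyX hornerX.
move=> /subr0_eq /(congr1 (fun x => x * @tK R)); rewrite divfK ?tK_neq0 // -rmorphM.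
move=> /iota_inj e; have := congr1 (fun x : {poly R} => x`_0) e.
rewrite /= coefC coefMX /= => /eqP.
by rewrite (negPf hf0).
Qed.
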